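(* Let $G=\bigsqcup_{i=1}^t K_{n_i}$ be a disjoint union of complete graphs with $t\ge2$ and all $n_i\ge1$. Then $\mathcal{K}^{\mathsf{TJ}}(G)=\{k:k\ge2\}$.
   Context: All graphs are finite, simple, undirected. A $k$-clique of a graph $H$ is a set of $k$ pairwise adjacent vertices. For a graph $H$ and integer $k\ge1$, the Token Jumping graph $\mathsf{TJ}_k(H)$ has as vertices the $k$-cliques of $H$, and two $k$-cliques $A,B$ are adjacent iff $|A\cap B|=k-1$. For a graph $G$, $\mathcal{K}^{\mathsf{TJ}}(G)=\{k\ge1:\ \exists H,\ \mathsf{TJ}_k(H)\cong G\}$. *)

(* Defs.v *)
From mathcomp Require Import all_boot.
Set Implicit Arguments. Unset Strict Implicit. Unset Printing Implicit Defensive.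

Record sgraph := SGraph {
  svert : finType;
  sadj : rel svert;
  sadj_sym : symmetric sadj;
  sadj_irr : irreflexive sadj }.

Definition is_clique (H : sgraph) (A : {set svert H}) : bool :=
  [forall x in A, forall y in A, (x != y) ==> @sadj H x y].

Definition is_kclique (H : sgraph) (k : nat) (A : {set svert H}) : bool :=
  is_clique A && (#|A| == k).

Definition TJvert (H : sgraph) (k : nat) := {A : {set svert H} | is_kclique k A}.

Definition TJadj (H : sgraph) (k : nat) : rel (TJvert H k) :=
  fun A B => #|val A :&: val B| == k.-1.

Definition graph_iso (T1 T2 : finType) (e1 : rel T1) (e2 : rel T2) : Prop :=
  exists f : T1 -> T2, bijective f /\ forall x y, e1 x y = e2 (f x) (f y).

Definition KTJ (G : sgraph) (k : nat) : Prop :=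
  1 <= k /\ exists H : sgraph, graph_iso (@TJadj H k) (@sadj G).

(* Disjoint union of complete graphs K_{n_0}, ..., K_{n_{t-1}}. *)
Definition ucliq_adj (t : nat) (n : 'I_t -> nat) : rel {i : 'I_t & 'I_(n i)} :=
  fun x y => (tag x == tag y) && (x != y).

Lemma ucliq_sym t (n : 'I_t -> nat) : symmetric (@ucliq_adj t n).
Proof. by move=> x y; rewrite /ucliq_adj (eq_sym (tag x)) (eq_sym x). Qed.

Lemma ucliq_irr t (n : 'I_t -> nat) : irreflexive (@ucliq_adj t n).
Proof. by move=> x; rewrite /ucliq_adj /= !eqxx. Qed.

Definition union_complete (t : nat) (n : 'I_t -> nat) : sgraph :=
  SGraph (@ucliq_sym t n) (@ucliq_irr t n).

(* Main.v *)
Require Import Defs.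
From mathcomp Require Import all_boot.
Set Implicit Arguments. Unset Strict Implicit.

Lemma no_k1 (t : nat) (n : 'I_t -> nat) :
  2 <= t -> (forall i, 1 <= n i) -> ~ KTJ (union_complete n) 1.
Proof.
move=> ht hn [_ [H [f [[g fg gf] hf]]]].
pose i0 : 'I_t := Ordinal (ltnW ht).
pose i1 : 'I_t := Ordinal ht.
pose x : {i : 'I_t & 'I_(n i)} := Tagged (fun i => 'I_(n i)) (Ordinal (hn i0)).
pose y : {i : 'I_t & 'I_(n i)} := Tagged (fun i => 'I_(n i)) (Ordinal (hn i1)).
have := hf (g x) (g y); rewrite !gf /= /ucliq_adj /= /TJadj.

move=> /negbT hne.
have hxy : g x != g y.
  apply/negP=> /eqP e. have := f_equal f e. rewrite !gf => /(f_equal (@tag _ _)) /= /eqP.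
  by [].
have /andP [_ /cards1P [a ea]] := valP (g x).
have /andP [_ /cards1P [b eb]] := valP (g y).
apply/negP: hxy; apply/negPn/eqP; apply: val_inj => /=.
rewrite ea eb; case: (eqVneq a b) => [-> //|nab].
move: hne; rewrite ea eb; have -> : [set a] :&: [set b] = set0.
  apply/setP=> z; rewrite !inE; apply/negP => /andP [/eqP -> /eqP]. by apply/eqP.
by rewrite cards0.
Qed.

Section Constr.
Variables (t : nat) (n : 'I_t -> nat) (k : nat).
Hypothesis hk : 2 <= k.
Let m := k.-1.
Lemma ltmk : m < k. Proof. by rewrite /m; case: k hk. Qed.
Lemma k0 : 0 < k. Proof. by case: k hk. Qed.
Definition GV := {i : 'I_t & 'I_(n i)}.
Definition HV := (GV + ('I_t * 'I_m))%type.
Definition hadj (u v : HV) : bool :=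
  match u, v with
  | inl _, inl _ => false
  | inl x, inr p => tag x == p.1
  | inr p, inl y => tag y == p.1
  | inr p, inr q => (p.1 == q.1) && (p.2 != q.2)
  end.
Lemma hadj_sym : symmetric hadj.
Proof.
by case=> [x|[i c]] [y|[j d]] //=; rewrite eq_sym // (eq_sym c).
Qed.
Lemma hadj_irr : irreflexive hadj.
Proof. by case=> [x|[i c]] //=; rewrite !eqxx. Qed.
Definition Hg := SGraph hadj_sym hadj_irr.

Definition R (i : 'I_t) : {set HV} := [set inr (i, c) | c : 'I_m].
Lemma memR i (v : HV) : (v \in R i) = (if v is inr p then p.1 == i else false).
Proof.
apply/imsetP; case: v => [x|[j c]] /=.
- by case.
- case: eqP => [->|ne]; first by exists c.
  by case=> d _ [].
Qed.
Lemma cardR i : #|R i| = m.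
Proof.
rewrite card_imset ?cardsT ?card_ord //.
by move=> c d [].
Qed.
Definition S (x : GV) : {set HV} := inl x |: R (tag x).
Lemma memS x v : (v \in S x) = (if v is inr p then p.1 == tag x else v == inl x).
Proof. by rewrite in_setU1 memR; case: v => [y|p] /=; rewrite ?orbF. Qed.
Lemma cardS x : #|S x| = k.
Proof.
by rewrite cardsU1 cardR memR /m /=; case: k hk.
Qed.
Lemma S_clique x : is_kclique (H:=Hg) k (S x).
Proof.
rewrite /is_kclique cardS eqxx andbT.
apply/forallP=> u; apply/implyP; rewrite memS => hu.
apply/forallP=> v; apply/implyP; rewrite memS => hv.
apply/implyP => huv.
case: u v hu hv huv => [y|[i c]] [z|[j d]] //=.
- by move=> /eqP [->] /eqP [->]; rewrite eqxx.
- by move=> /eqP [->] /eqP ->.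
- by move=> /eqP -> /eqP [->].
- move=> /eqP -> /eqP -> ne; rewrite eqxx /=.
  by apply: contra ne => /eqP ->.
Qed.
Definition g (x : GV) : TJvert Hg k := exist _ (S x) (S_clique x).

Lemma SI x y : S x :&: S y =
  if x == y then S x else if tag x == tag y then R (tag x) else set0.
Proof.
apply/setP=> v; rewrite inE !memS.
case: (eqVneq x y) => [<-|nxy]; first by rewrite andbb memS.
case: (eqVneq (tag x) (tag y)) => [exy|nt].
- rewrite memR exy; case: v => [z|p] /=.
    by apply/negP => /andP [/eqP [->] /eqP [] /eqP]; rewrite (negbTE nxy).
  by rewrite andbb.
- rewrite inE; case: v => [z|p] /=.
    by apply/negP => /andP [/eqP [->] /eqP [] /eqP]; rewrite (negbTE nxy).
  by apply/negP => /andP [/eqP -> /eqP]; apply/eqP.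
Qed.

Lemma g_adj x y : TJadj (g x) (g y) = ucliq_adj x y.
Proof.
rewrite /TJadj /= SI /ucliq_adj.
case: (eqVneq x y) => [->|nxy] /=.
  by rewrite eqxx cardS andbF; case: k hk => // k' _; rewrite /= eqn_leq ltnn.
rewrite andbT; case: (eqVneq (tag x) (tag y)) => _; first by rewrite cardR eqxx.
by rewrite cards0; case: k hk => [|[|]].
Qed.

Lemma g_inj : injective g.
Proof.
move=> x y /(f_equal val) /= e.
have : inl x \in S y by rewrite -e memS.
by rewrite memS => /eqP [].
Qed.

Lemma g_surj (A : TJvert Hg k) : exists x, g x = A.
Proof.
case: A => A hA.
have /andP [hcl /eqP hc] := hA.
have hadjA u v : u \in A -> v \in A -> u != v -> hadj u v.
  by move=> hu hv huv; move: hcl => /forallP /(_ u); rewrite hu /= => /forallP /(_ v); rewrite hv /= => /implyP; apply.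
have [x hx] : exists x, inl x \in A.
  have : 0 < #|A| by rewrite hc k0.
  case/card_gt0P => a ha.
  case: a ha => [x hx|[i c] ha]; first by exists x.
  case: (boolP [exists z, inl z \in A]) => [/existsP [z hz]|/existsPn hno]; first by exists z.
  have sub : A \subset R i.
    apply/subsetP => v hv; rewrite memR.
    case: v hv => [z hz|[j d] hv]; first by move: (hno z); rewrite hz.
    case: (eqVneq (inr (j, d) : HV) (inr (i, c))) => [[-> _] //|ne].
    by have := hadjA _ _ hv ha ne => /andP [/eqP ->].
  by move: (subset_leq_card sub); rewrite cardR hc leqNgt ltmk.
have sub : A \subset S x.
  apply/subsetP => v hv; rewrite memS.
  case: (eqVneq v (inl x)) => [-> //|ne].
  have := hadjA _ _ hv hx ne.
  by case: v hv ne => [z|p] //= _ _ /eqP ->.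
exists x; apply: val_inj => /=.
by apply/esym/eqP; rewrite eqEcard sub cardS hc leqnn.
Qed.

Lemma KTJ_k : KTJ (union_complete n) k.
Proof.
split; first exact: ltnW.
exists Hg.
have gb : bijective g.
  apply: (@inj_card_bij _ _ g g_inj).
  rewrite -(card_codom g_inj); apply/subset_leq_card/subsetP => y _.
  by have [x <-] := g_surj y; exact: codom_f.
case: gb => h gh hg.
exists h; split; first exact: (Bijective hg gh).
by move=> A B; rewrite -{1}(hg A) -{1}(hg B) g_adj.
Qed.
End Constr.

Theorem proposition4p9 (t : nat) (n : 'I_t -> nat) :
  2 <= t -> (forall i, 1 <= n i) ->
  forall k : nat, KTJ (union_complete n) k <-> 2 <= k.
Proof.
move=> ht hn k; split.
- move=> hK; have [k1 _] := hK.
  case: k k1 hK => [//|[|k']] _ hK //.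
  by case: (no_k1 ht hn hK).
- move=> hk; exact: KTJ_k.
Qed.
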